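(* Let $M(n,h)=\frac{2n+2-2\lceil 2\sqrt{n+h}\,\rceil}{4}$. A polyomino with $n$ tiles and $h$ holes is efficiently structured if and only if $h=M(n,h)$.
   Context: A polyomino is a finite union of closed unit squares (tiles) of the square lattice, any two meeting (if at all) in a whole edge, whose interior is connected. Its holes are the bounded connected components of its complement in the plane; the area of a hole is the number of unit squares needed to fill it. The dual graph has a vertex per tile and an edge between tiles sharing an edge; the polyomino is acyclic if its dual graph is a tree. $p_o(A)$ is the number of unit edges on the boundary of $A$ not bounding a hole. A polyomino with $n$ tiles and $h$ holes has minimal outer perimeter if $p_o(A)=2\lceil 2\sqrt{n+h}\,\rceil$, and is efficiently structured if it is acyclic, each hole has area one, and it has minimal outer perimeter. *)

(* Defs.v *)
From mathcomp Require Import all_boot all_order all_algebra.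
From mathcomp Require Import finmap.
From mathcomp Require Import boolp.
From mathcomp Require Import zify.
Set Implicit Arguments. Unset Strict Implicit. Unset Printing Implicit Defensive.
Import Order.TTheory GRing.Theory Num.Theory.
Local Open Scope fset_scope.

(* A unit square (tile / cell) of the square lattice is identified with the
   integer coordinates of its lower-left corner: [x, x+1] x [y, y+1]. *)
Definition cell := (int * int)%type.

Definition adj (c d : cell) : bool :=
  (absz (c.1 - d.1)%R + absz (c.2 - d.2)%R == 1)%N.

Definition nbrs (c : cell) : seq cell :=
  [:: (c.1 + 1, c.2)%R; (c.1 - 1, c.2)%R; (c.1, c.2 + 1)%R; (c.1, c.2 - 1)%R].

Definition connected_in (S : pred cell) : Prop :=
  forall c d, S c -> S d ->
    exists p : seq cell, [/\ path adj c p, last c p = d & all S p].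

(* A polyomino: a nonempty finite set of tiles whose interior is connected,
   i.e. whose dual graph (edge adjacency) is connected. *)
Definition polyomino (A : {fset cell}) : Prop :=
  A != fset0 /\ connected_in (fun c => c \in A).

(* A hole: a bounded connected component of the complement.  Discretely, it is
   a finite nonempty set of non-tile cells, connected by edge adjacency, and
   closed under edge adjacency among non-tile cells (a maximal such set). *)
Definition is_hole (A H : {fset cell}) : Prop :=
  [/\ H != fset0,
      (forall c, c \in H -> c \notin A),
      (forall c d, c \in H -> adj c d -> d \notin A -> d \in H)
    & connected_in (fun c => c \in H)].

Definition num_holes (A : {fset cell}) (h : nat) : Prop :=
  exists Hs : seq {fset cell},
    [/\ uniq Hs, (forall H, is_hole A H <-> H \in Hs) & size Hs = h].

Definition in_some_hole (A : {fset cell}) (d : cell) : Prop :=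
  exists H, is_hole A H /\ d \in H.

(* p_o(A): number of unit boundary edges of A not bounding a hole.  A unit
   boundary edge is a pair (tile c, non-tile neighbour d); it bounds a hole iff
   d lies in a hole. *)
Definition outer_perimeter (A : {fset cell}) : nat :=
  \sum_(c <- A) count (fun d => (d \notin A) && ~~ `[< in_some_hole A d >])
                      (nbrs c).

Definition dual_acyclic (A : {fset cell}) : Prop :=
  ~ exists p : seq cell, [/\ (3 <= size p)%N, all (fun c => c \in A) p
                           & ucycle adj p].

Definition dual_tree (A : {fset cell}) : Prop :=
  connected_in (fun c => c \in A) /\ dual_acyclic A.

(* ceil(2 * sqrt m) for a natural number m: the least natural k with
   2 sqrt m <= k, i.e. 4 m <= k^2. *)
Lemma ceil_2sqrt_ex (m : nat) : exists k : nat, (4 * m <= k * k)%N.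
Proof. exists (2 * m + 1)%N. lia. Qed.

Definition ceil_2sqrt (m : nat) : nat := ex_minn (ceil_2sqrt_ex m).

Definition minimal_outer_perimeter (A : {fset cell}) (h : nat) : Prop :=
  outer_perimeter A = (2 * ceil_2sqrt (#|`A| + h))%N.

Definition efficiently_structured (A : {fset cell}) (h : nat) : Prop :=
  [/\ dual_tree A,
      (forall H, is_hole A H -> #|`H| = 1%N)
    & minimal_outer_perimeter A h].

Definition M (n h : nat) : rat :=
  (((2 * n + 2)%:R - (2 * ceil_2sqrt (n + h))%:R) / 4%:R)%R.

(* Main.v *)
Require Import Defs.
From mathcomp Require Import all_boot all_order all_algebra.
From mathcomp Require Import finmap zify boolp ring.
Set Implicit Arguments. Unset Strict Implicit. Unset Printing Implicit Defensive.
Import Order.TTheory GRing.Theory Num.Theory.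


Lemma adj_nbrs c d : adj c d = (d \in nbrs c).
Proof.
case: c d => [x y] [u v]; rewrite /adj /nbrs /= !inE !xpair_eqE.
apply/idP/idP.
- move=> /eqP H. lia.
- move=> H. apply/eqP. lia.
Qed.

Lemma nbrs_uniq c : uniq (nbrs c).
Proof. case: c => x y; rewrite /nbrs /= !inE !xpair_eqE; lia. Qed.

Lemma nbrs_irr c : c \notin nbrs c.
Proof. case: c => x y; rewrite /nbrs /= !inE !xpair_eqE; lia. Qed.

Lemma nbrs_sym c d : (d \in nbrs c) = (c \in nbrs d).
Proof. rewrite -!adj_nbrs; case: c d => [x y] [u v]; rewrite /adj /=; lia. Qed.

Lemma count_bsum (T : Type) (a : pred T) (s : seq T) :
  count a s = \sum_(x <- s) (a x : nat).
Proof. by elim: s => [|x s IH]; rewrite ?big_nil ?big_cons //= IH. Qed.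

Lemma count_sym (T : eqType) (s t : seq T) : uniq s -> uniq t ->
  count (fun x => x \in t) s = count (fun x => x \in s) t.
Proof.
move=> us ut; rewrite -!size_filter; apply: perm_size; apply: uniq_perm;
  rewrite ?filter_uniq // => x; by rewrite !mem_filter andbC.
Qed.

Lemma double_count (X Y : seq cell) : uniq X -> uniq Y ->
  \sum_(c <- X) count (fun d => d \in Y) (nbrs c) =
  \sum_(d <- Y) count (fun c => c \in X) (nbrs d).
Proof.
move=> uX uY.
under eq_bigr => c _ do rewrite count_sym ?nbrs_uniq // count_bsum.
rewrite exchange_big; apply: eq_bigr => d _.
by rewrite count_sym ?nbrs_uniq // count_bsum; apply: eq_bigr => c _; rewrite nbrs_sym.
Qed.

Lemma count_predC' (T : Type) (a : pred T) (s : seq T) :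
  count a s + count (fun x => ~~ a x) s = size s.
Proof. exact: count_predC. Qed.

Definition E2 (S : seq cell) := \sum_(c <- S) count (fun d => d \in S) (nbrs c).
Definition perim (S : seq cell) := \sum_(c <- S) count (fun d => d \notin S) (nbrs c).

Lemma E2_perim S : E2 S + perim S = 4 * size S.
Proof.
rewrite /E2 /perim -big_split /=.
rewrite (eq_bigr (fun _ => 4)); last first.
  by move=> c _; exact: (count_predC' (fun d => d \in S) (nbrs c)).
by rewrite big_const_seq /= count_predT; elim: S => //= x s ->; rewrite mulnS.
Qed.

Lemma shift_bound (S : seq cell) (sh : cell -> cell) (pi phi : cell -> int) :
  (forall c, pi (sh c) = pi c) -> (forall c, phi (sh c) = (phi c + 1)%R) ->
  size (undup (map pi S)) <= count (fun c => sh c \notin S) S.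
Proof.
move=> Hpi Hphi.
have key c : c \in S -> exists2 c', c' \in S & (pi c' == pi c) && (sh c' \notin S).
  move=> cS.
  case: (boolP (has (fun c' => (pi c' == pi c) && (sh c' \notin S)) S)) => [/hasP//|/hasPn H].
  exfalso.
  have iterS k : iter k sh c \in S /\ pi (iter k sh c) = pi c.
    elim: k => [|k [IH1 IH2]] //=; split; last by rewrite Hpi.
    by move: (H _ IH1); rewrite IH2 eqxx /= negbK.
  have phik (k : nat) : phi (iter k sh c) = (phi c + k%:Z)%R.
    elim: k => [|k IH] /=; first by rewrite addr0.
    rewrite Hphi IH; lia.
  pose L := map (fun k => iter k sh c) (iota 0 (size S).+1).
  have uL : uniq L.
    rewrite map_inj_uniq ?iota_uniq // => i j /(congr1 phi); rewrite !phik; lia.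
  have : size L <= size S.
    by apply: uniq_leq_size => // x /mapP [k _ ->]; case: (iterS k).
  by rewrite size_map size_iota ltnn.
rewrite -size_filter -(size_map pi); apply: uniq_leq_size; first exact: undup_uniq.
move=> y; rewrite mem_undup => /mapP [c cS ->].
case: (key c cS) => c' c'S /andP [/eqP <- Hc'].
by apply: map_f; rewrite mem_filter Hc'.
Qed.

Lemma perim_split (S : seq cell) : perim S =
  count (fun c => ((c.1 + 1)%R, c.2) \notin S) S + count (fun c => ((c.1 - 1)%R, c.2) \notin S) S
  + (count (fun c => (c.1, (c.2 + 1)%R) \notin S) S + count (fun c => (c.1, (c.2 - 1)%R) \notin S) S).
Proof.
rewrite /perim !count_bsum -!big_split /=; apply: eq_bigr => c _; rewrite /nbrs /=; by rewrite addn0 !addnA.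
Qed.

Lemma size_rows_cols (S : seq cell) : uniq S ->
  size S <= size (undup [seq c.1 | c <- S]) * size (undup [seq c.2 | c <- S]).
Proof.
move=> uS; rewrite -(size_allpairs pair); apply: uniq_leq_size => // [[x y]] cS.
by apply: allpairs_f; rewrite mem_undup; apply/mapP; exists (x, y).
Qed.

Lemma perim_rows_cols (S : seq cell) :
  2 * (size (undup [seq c.1 | c <- S]) + size (undup [seq c.2 | c <- S])) <= perim S.
Proof.
rewrite perim_split.
have h1 := @shift_bound S (fun c => ((c.1 + 1)%R, c.2)) (fun c : cell => c.2) (fun c : cell => c.1) (fun _ => erefl) (fun _ => erefl).
have h2 := @shift_bound S (fun c => ((c.1 - 1)%R, c.2)) (fun c : cell => c.2) (fun c => - c.1)%R (fun _ => erefl) (fun c => ltac:(simpl; lia)).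
have h3 := @shift_bound S (fun c => (c.1, (c.2 + 1)%R)) (fun c : cell => c.1) (fun c : cell => c.2) (fun _ => erefl) (fun _ => erefl).
have h4 := @shift_bound S (fun c => (c.1, (c.2 - 1)%R)) (fun c : cell => c.1) (fun c => - c.2)%R (fun _ => erefl) (fun c => ltac:(simpl; lia)).
apply: (leq_trans _ (leq_add (leq_add h1 h2) (leq_add h3 h4))); apply: eq_leq; rewrite mulnDr !mul2n -!addnn addnC; reflexivity.
Qed.

Lemma ceil_spec m : 4 * m <= ceil_2sqrt m * ceil_2sqrt m.
Proof. by rewrite /ceil_2sqrt; case: ex_minnP. Qed.

Lemma ceil_le m k : 4 * m <= k * k -> ceil_2sqrt m <= k.
Proof. by rewrite /ceil_2sqrt; case: ex_minnP => k0 _ H /H. Qed.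

Lemma ceil_mono m m' : m <= m' -> ceil_2sqrt m <= ceil_2sqrt m'.
Proof. move=> H; apply: ceil_le; have := ceil_spec m'; lia. Qed.

Lemma ceil_ge3 m : 2 <= m -> 3 <= ceil_2sqrt m.
Proof. move=> H; have := ceil_spec m; set k := ceil_2sqrt m; nia. Qed.

Lemma isoperim (S : seq cell) : uniq S -> 2 * ceil_2sqrt (size S) <= perim S.
Proof.
move=> uS; have := perim_rows_cols S; have := size_rows_cols uS.
set r := size (undup _); set c := size (undup _) => H1 H2.
have : ceil_2sqrt (size S) <= r + c.
  apply: ceil_le.
  suff : 4 * (r * c) <= (r + c) * (r + c) by lia.
  clear; case: (leqP r c) => h.
    have [d ->] : exists d, c = r + d by exists (c - r); lia.
    nia.
  have [d ->] : exists d, r = c + d by exists (r - c); lia.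
  nia.
lia.
Qed.

Lemma perim1 c : perim [:: c] = 4.
Proof. by rewrite /perim big_seq1; case: c => x y; rewrite /nbrs /= !inE !xpair_eqE; lia. Qed.

Lemma adj_sym c d : adj c d = adj d c.
Proof. by rewrite !adj_nbrs nbrs_sym. Qed.

Lemma E2_perm (W W' : seq cell) : perm_eq W W' -> E2 W = E2 W'.
Proof.
move=> H; rewrite /E2 (perm_big _ H); apply: eq_bigr => c _.
by apply: eq_count => d; rewrite (perm_mem H).
Qed.

Lemma E2_cons (W : seq cell) v : uniq W -> v \notin W ->
  E2 (v :: W) = E2 W + 2 * count (fun d => d \in W) (nbrs v).
Proof.
move=> uW vW; rewrite /E2 big_cons.
have -> : count (fun d => d \in v :: W) (nbrs v) = count (fun d => d \in W) (nbrs v).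
  apply: eq_in_count => d dn; rewrite in_cons.
  by case: eqP dn => // ->; rewrite (negbTE (nbrs_irr v)).
have -> : \sum_(c <- W) count (fun d => d \in v :: W) (nbrs c) =
          \sum_(c <- W) ((c \in nbrs v) + count (fun d => d \in W) (nbrs c)).
  apply: eq_bigr => c _; rewrite !count_bsum.
  rewrite nbrs_sym -(count_uniq_mem v (nbrs_uniq c)) count_bsum -big_split /=.
  apply: eq_bigr => d _; rewrite in_cons; case: eqP => [->|] /=; last by rewrite add0n.
  by rewrite (negbTE vW).
rewrite big_split -(count_bsum (fun c => c \in nbrs v)) count_sym ?nbrs_uniq //.
by rewrite addnA addnn -mul2n addnC.
Qed.

Lemma exit_path (W V : seq cell) a p : a \in W -> path adj a p ->
  last a p \notin W -> all (fun c => c \in V) p ->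
  exists w v, [/\ w \in W, v \in V, v \notin W & adj w v].
Proof.
elim: p a => [|b p IH] a aW /=; first by rewrite aW.
move=> /andP [ab pb] lW /andP [bV pV].
case: (boolP (b \in W)) => bW; first exact: IH bW pb lW pV.
by exists a, b.
Qed.

Lemma exists_exit (V W : seq cell) w0 : uniq V -> connected_in (fun c => c \in V) ->
  {subset W <= V} -> size W < size V -> w0 \in W ->
  exists w v, [/\ w \in W, v \in V, v \notin W & adj w v].
Proof.
move=> uV cV sWV lt w0W.
case: (boolP (all (fun x => x \in W) V)) => [/allP H | /allPn [x xV xW]].
  by have := uniq_leq_size uV H; rewrite leqNgt lt.
have [p [Hp Hl Ha]] := cV w0 x (sWV _ w0W) xV.
by apply: (exit_path w0W Hp); rewrite ?Hl.
Qed.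

Lemma connected_cons (W : seq cell) v w : connected_in (fun c => c \in W) ->
  w \in W -> adj w v -> connected_in (fun c => c \in v :: W).
Proof.
move=> cW wW wv c d; rewrite !in_cons.
have sub : forall p : seq cell, all (fun c => c \in W) p -> all (fun c => c \in v :: W) p.
  by move=> p; apply: sub_all => x xW; rewrite in_cons xW orbT.
case: eqP => [->|_] /=; case: eqP => [->|_] /= => Hc Hd.
- by exists [::].
- have [p [Hp Hl Ha]] := cW w d wW Hd.
  exists (w :: p); split => //=; first by rewrite adj_sym wv.
  by rewrite in_cons wW orbT sub.
- have [p [Hp Hl Ha]] := cW c w Hc wW.
  exists (rcons p v); split; rewrite ?last_rcons //.
    by rewrite rcons_path Hp Hl.
  by rewrite all_rcons in_cons eqxx sub.
- have [p [Hp Hl Ha]] := cW c d Hc Hd.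
  by exists p; split => //; rewrite sub.
Qed.

Lemma deg_pos (W : seq cell) w v : w \in W -> adj w v ->
  0 < count (fun d => d \in W) (nbrs v).
Proof.
move=> wW wv; rewrite -has_count; apply/hasP; exists w => //.
by rewrite -adj_nbrs adj_sym.
Qed.

Lemma grow1 (V : seq cell) : uniq V -> connected_in (fun c => c \in V) ->
  forall W w0, uniq W -> {subset W <= V} -> w0 \in W ->
  E2 W + 2 * (size V - size W) <= E2 V.
Proof.
move=> uV cV W w0 uW sWV w0W.
have := uniq_leq_size uW sWV.
move Hk: (size V - size W) => k; elim: k W uW sWV w0W Hk => [|k IH] W uW sWV w0W Hk hle.
  have Hle2 : size V <= size W by lia.
  have [Hs Heq] := uniq_min_size uW sWV Hle2.
  by rewrite (E2_perm (uniq_perm uW uV Heq)) muln0 addn0.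
have Hlt : size W < size V by lia.
have [w [v [wW vV vW wv]]] := exists_exit uV cV sWV Hlt w0W.
have uW' : uniq (v :: W) by rewrite /= vW.
have sW' : {subset v :: W <= V} by move=> x; rewrite in_cons => /orP [/eqP ->|/sWV].
have Hk' : size V - size (v :: W) = k by rewrite /= subnS Hk.
have Hle' : size (v :: W) <= size V by exact: Hlt.
have w0W' : w0 \in v :: W by rewrite in_cons w0W orbT.
have := IH (v :: W) uW' sW' w0W' Hk' Hle'.
rewrite E2_cons // => H.
have := deg_pos wW wv; lia.
Qed.

Lemma two_of_count (P : pred cell) (s : seq cell) : uniq s -> 2 <= count P s ->
  exists x y, [/\ x \in s, y \in s, P x, P y & x != y].
Proof.
move=> us; rewrite -size_filter.
have uf : uniq (filter P s) by rewrite filter_uniq.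
have mf z : z \in filter P s -> z \in s /\ P z by rewrite mem_filter => /andP [].
case: (filter P s) uf mf => [|x [|y f]] //= /andP [xn _] mf _.
have [xs Px] := mf x (mem_head _ _).
have [ys Py] : y \in s /\ P y by apply: mf; rewrite !in_cons eqxx orbT.
exists x, y; split => //; apply: contraNneq xn => ->; exact: mem_head.
Qed.

Definition acyc (V : seq cell) : Prop :=
  ~ exists p : seq cell, [/\ (3 <= size p)%N, all (fun c => c \in V) p & ucycle adj p].

Lemma grow2 (V : seq cell) : uniq V -> connected_in (fun c => c \in V) -> acyc V ->
  forall W w0, uniq W -> {subset W <= V} -> w0 \in W -> connected_in (fun c => c \in W) ->
  E2 V <= E2 W + 2 * (size V - size W).
Proof.
move=> uV cV aV W w0 uW sWV w0W cW.
have := uniq_leq_size uW sWV.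
move Hk: (size V - size W) => k; elim: k W uW sWV w0W cW Hk => [|k IH] W uW sWV w0W cW Hk hle.
  have Hle2 : size V <= size W by lia.
  have [Hs Heq] := uniq_min_size uW sWV Hle2.
  by rewrite (E2_perm (uniq_perm uW uV Heq)) muln0 addn0.
have Hlt : size W < size V by lia.
have [w [v [wW vV vW wv]]] := exists_exit uV cV sWV Hlt w0W.
have uW' : uniq (v :: W) by rewrite /= vW.
have sW' : {subset v :: W <= V} by move=> x; rewrite in_cons => /orP [/eqP ->|/sWV].
have Hk' : size V - size (v :: W) = k by rewrite /= subnS Hk.
have Hle' : size (v :: W) <= size V by exact: Hlt.
have w0W' : w0 \in v :: W by rewrite in_cons w0W orbT.
have := IH (v :: W) uW' sW' w0W' (connected_cons cW wW wv) Hk' Hle'.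
rewrite E2_cons // => H.
suff : count (fun d => d \in W) (nbrs v) <= 1 by lia.
rewrite leqNgt; apply/negP => /(two_of_count (nbrs_uniq v)) [w1 [w2 [n1 n2 W1 W2 neq]]].
apply: aV.
have [p [Hp Hl Ha]] := cW w1 w2 W1 W2.
move: Hl; case: (shortenP Hp) => p' Hp' Up' Hsub Hl.
exists (v :: w1 :: p'); split.
- case: p' Hl {Hp' Up' Hsub} => [|x p'] /= Hl; last by [].
  by rewrite Hl eqxx in neq.
- rewrite /= vV (sWV _ W1) /=; apply/allP => x /Hsub xp.
  by apply: sWV; move/allP: Ha; apply.
- rewrite /ucycle cons_uniq Up' andbT; apply/andP; split.
    rewrite /= rcons_path Hp' Hl /= adj_nbrs n1 /=.
    by rewrite adj_sym adj_nbrs n2.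
  rewrite in_cons negb_or; apply/andP; split.
    by apply: contraNneq vW => ->.
  apply/negP => /Hsub vp; move/allP: Ha => /(_ v vp); exact/negP.
Qed.

Lemma next_neq_prev (p : seq cell) x : uniq p -> 3 <= size p -> x \in p ->
  next p x != prev p x.
Proof.
move=> up sp xp; case: (rot_to xp) => i s' Hrot.
have up' : uniq (x :: s') by rewrite -Hrot rot_uniq.
have sz : 3 <= size (x :: s') by rewrite -Hrot size_rot.
rewrite -(next_rot i up) -(prev_rot i up) Hrot.
case: s' up' sz {Hrot} => [|y [|z t]] // up' _.
apply/eqP => E.
have := next_prev up' x; rewrite -E.
move: up'; rewrite /= !in_cons !negb_or => /andP [/and3P [xy xz xt] /andP [/andP [yz yt] _]].
rewrite eqxx /= eq_sym (negbTE xy) eqxx => /eqP; rewrite eq_sym.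
by rewrite (negbTE xz).
Qed.

Lemma two_le_count (P : pred cell) (s : seq cell) x y :
  x \in s -> y \in s -> x != y -> P x -> P y -> 2 <= count P s.
Proof.
move=> xs ys xy Px Py.
have H1 : count (predU (pred1 x) (pred1 y)) s <= count P s.
  by apply: sub_count => d /orP [/eqP->|/eqP->].
have H2 := count_predUI (pred1 x) (pred1 y) s.
have H3 : count (predI (pred1 x) (pred1 y)) s = 0.
  apply/eqP; rewrite -leqn0 leqNgt -has_count; apply/hasPn => d _ /=.
  by apply/andP => [[/eqP -> /eqP E]]; rewrite E eqxx in xy.
have H4 : 0 < count (pred1 x) s by rewrite -has_count; apply/hasP; exists x => /=.
have H5 : 0 < count (pred1 y) s by rewrite -has_count; apply/hasP; exists y => /=.
lia.
Qed.

Lemma E2_cycle (p : seq cell) : 3 <= size p -> ucycle adj p -> 2 * size p <= E2 p.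
Proof.
move=> sp /andP [cp up].
have -> : 2 * size p = \sum_(c <- p) 2 by elim: (p) => [|a q IH]; rewrite ?big_nil ?big_cons ?muln0 //= mulnS IH.
rewrite /E2 big_seq [X in _ <= X]big_seq; apply: leq_sum => c cp'.
apply: (@two_le_count _ _ (next p c) (prev p c)).
- by rewrite -adj_nbrs next_cycle.
- by rewrite -adj_nbrs adj_sym prev_cycle.
- exact: next_neq_prev.
- by rewrite /= mem_next.
- by rewrite /= mem_prev.
Qed.

Lemma count_split (T : Type) (a b : pred T) (s : seq T) :
  count a s = count (fun x => a x && b x) s + count (fun x => a x && ~~ b x) s.
Proof. by elim: s => //= x s ->; case: (a x); case: (b x) => //=; rewrite addnS. Qed.

Section Holes.
Variable A : {fset cell}.

Lemma hole_disj H c : is_hole A H -> c \in H -> c \notin A.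
Proof. by case=> _ h _ _; apply: h. Qed.

Lemma hole_closed_path H z p : is_hole A H -> z \in H -> path adj z p ->
  all (fun c => c \notin A) p -> last z p \in H.
Proof.
case=> _ _ hc _; elim: p z => [|b p IH] z //= zH /andP [zb pb] /andP [bA pA].
exact: IH (hc _ _ zH zb bA) pb pA.
Qed.

Lemma hole_sub H1 H2 x y : is_hole A H1 -> is_hole A H2 -> x \in H1 -> x \in H2 ->
  y \in H1 -> y \in H2.
Proof.
move=> h1 h2 x1 x2 y1; have [_ _ _ c1] := h1.
have [p [Hp Hl Ha]] := c1 x y x1 y1.
rewrite -Hl; apply: (hole_closed_path h2 x2 Hp).
by apply/allP => c /(allP Ha); apply: hole_disj h1.
Qed.

Lemma hole_eq H1 H2 x : is_hole A H1 -> is_hole A H2 -> x \in H1 -> x \in H2 -> H1 = H2.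
Proof.
move=> h1 h2 x1 x2; apply/fsetP => y; apply/idP/idP.
  exact: hole_sub h1 h2 x1 x2.
exact: hole_sub h2 h1 x2 x1.
Qed.

Lemma hole_nbr H d e : is_hole A H -> d \in H -> e \in nbrs d -> (e \in A) = (e \notin H).
Proof.
move=> h dH ed; have [_ hd hc _] := h.
case eH: (e \in H) => /=; first by apply/negbTE/hd.
case eA: (e \in A) => //.
have := hc d e dH; rewrite adj_nbrs ed eA eH => /(_ isT isT) //.
Qed.

Variable Hs : seq {fset cell}.
Hypothesis uHs : uniq Hs.
Hypothesis HHs : forall H, is_hole A H <-> H \in Hs.

Lemma has_sum d : (has (fun H : {fset cell} => d \in H) Hs : nat) = \sum_(H <- Hs) (d \in H).
Proof.
have : forall H, H \in Hs -> is_hole A H by move=> H /HHs.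
elim: (Hs) uHs => [|H Hs' IH] //=; first by rewrite big_nil.
move=> /andP [HHs' uHs'] hh; rewrite big_cons -IH //; last by move=> H' H'in; apply: hh; rewrite in_cons H'in orbT.
case dH: (d \in H) => //=.
case hs: (has (fun H : {fset cell} => d \in H) Hs') => //.
move/hasP: hs => [H' H'in dH'].
have h1 : is_hole A H by apply: hh; exact: mem_head.
have h2 : is_hole A H' by apply: hh; rewrite in_cons H'in orbT.
have E := hole_eq h1 h2 dH dH'.
by rewrite E H'in in HHs'.
Qed.

Lemma ish_has d : `[< in_some_hole A d >] = has (fun H : {fset cell} => d \in H) Hs.
Proof.
apply/idP/idP.
  by move/asboolP => [H [/HHs hH dH]]; apply/hasP; exists H.
by move/hasP => [H /HHs hH dH]; apply/asboolP; exists H.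
Qed.

Lemma perim_hole H : is_hole A H ->
  \sum_(c <- A) count (fun d => d \in H) (nbrs c) = perim H.
Proof.
move=> h; rewrite double_count ?fset_uniq // /perim; apply: eq_big_seq => d dH.
by apply: eq_in_count => e ed; exact: hole_nbr h dH ed.
Qed.

Lemma perim_decomp : perim A = outer_perimeter A + \sum_(H <- Hs) perim H.
Proof.
rewrite /perim /outer_perimeter.
rewrite (eq_bigr (fun c => count (fun d => (d \notin A) && `[< in_some_hole A d >]) (nbrs c) +
   count (fun d => (d \notin A) && ~~ `[< in_some_hole A d >]) (nbrs c))); last first.
  by move=> c _; apply: count_split.
rewrite big_split addnC; congr (_ + _).
transitivity (\sum_(c <- A) \sum_(H <- Hs) count (fun d => d \in H) (nbrs c)).
  apply: eq_bigr => c _; rewrite count_bsum.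
  transitivity (\sum_(d <- nbrs c) \sum_(H <- Hs) (d \in H)).
    apply: eq_bigr => d _; rewrite ish_has -has_sum.
    case hs: has; last by rewrite andbF.
    move/hasP: hs => [H HH dH]; rewrite (hole_disj ((HHs H).2 HH) dH) //.
  by rewrite exchange_big; apply: eq_bigr => H _; rewrite count_bsum.
rewrite exchange_big; apply: eq_big_seq => H HH.
exact: perim_hole ((HHs H).2 HH).
Qed.

Definition U := flatten [seq enum_fset H | H <- Hs].

Lemma memU d : (d \in U) = has (fun H : {fset cell} => d \in H) Hs.
Proof. by rewrite /U; elim: (Hs) => //= H Hs' IH; rewrite mem_cat IH. Qed.

Lemma uniqU : uniq U.
Proof.
rewrite /U.
have : forall H, H \in Hs -> is_hole A H by move=> H /HHs.
elim: (Hs) uHs => [|H Hs' IH] //= /andP [HHs' uHs'] hh.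
rewrite cat_uniq fset_uniq IH ?andbT //; last first.
  by move=> H' H'in; apply: hh; rewrite in_cons H'in orbT.
apply/hasPn => d dU; apply/negP => dH.
have : has (fun H : {fset cell} => d \in H) Hs'.
  by move: dU; elim: (Hs') => //= H1 Hs1 IH1; rewrite mem_cat => /orP [->|/IH1 ->] //; rewrite orbT.
move/hasP => [H' H'in dH'].
have h1 : is_hole A H by apply: hh; exact: mem_head.
have h2 : is_hole A H' by apply: hh; rewrite in_cons H'in orbT.
have E := hole_eq h1 h2 dH dH'.
by rewrite E H'in in HHs'.
Qed.

Lemma sizeU : size Hs <= size U.
Proof.
rewrite /U.
have : forall H, H \in Hs -> is_hole A H by move=> H /HHs.
elim: (Hs) => [|H Hs' IH] //= hh.
rewrite size_cat; have [Hn _ _ _] := hh H (mem_head _ _).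
have : 0 < #|`H| by rewrite cardfs_gt0.
have := IH (fun H' H'in => hh H' (ltac:(by rewrite in_cons H'in orbT))).
move=> h1 h2; exact: (leq_add h2 h1).
Qed.

Lemma outer_ge : 2 * ceil_2sqrt (#|`A| + size Hs) <= outer_perimeter A.
Proof.
pose F := enum_fset A ++ U.
have uF : uniq F.
  rewrite /F cat_uniq fset_uniq uniqU andbT /=; apply/hasPn => d.
  rewrite memU => /hasP [H HH dH]; exact: hole_disj ((HHs H).2 HH) dH.
have pF : perim F = outer_perimeter A.
  have U0 : \sum_(c <- U) count (fun d => d \notin F) (nbrs c) = 0.
    apply: big1_seq => c /andP [_]; rewrite memU => /hasP [H HH cH].
    apply/eqP; rewrite -leqn0 leqNgt -has_count; apply/hasPn => e ec /=.
    rewrite negbK mem_cat memU.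
    have := hole_nbr ((HHs H).2 HH) cH ec.
    case: (e \in A) => //= /esym/negbFE eH.
    by apply/hasP; exists H.
  rewrite /perim big_cat U0; apply: etrans (addn0 _) _.
  rewrite /outer_perimeter; apply: eq_bigr => c _; apply: eq_count => e.
  by rewrite mem_cat negb_or memU ish_has.
have := isoperim uF; rewrite pF; apply: leq_trans.
rewrite leq_mul2l /=; apply: ceil_mono.
by rewrite /F size_cat leq_add2l sizeU.
Qed.

End Holes.

Lemma ceil_ge2 m : 1 <= m -> 2 <= ceil_2sqrt m.
Proof. move=> H; have := ceil_spec m; set k := ceil_2sqrt m; nia. Qed.

Lemma E2_single a : E2 [:: a] = 0.
Proof.
rewrite /E2 big_seq1; apply/eqP; rewrite -leqn0 leqNgt -has_count.
apply/hasPn => d dn; rewrite inE; apply: contraTneq dn => ->; exact: nbrs_irr.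
Qed.

Lemma conn_single a : connected_in (fun c => c \in [:: a]).
Proof. by move=> c d; rewrite !inE => /eqP -> /eqP ->; exists [::]. Qed.

Lemma perim_H_ge (H : {fset cell}) : H != fset0 ->
  4 + 2 * (1 < #|`H|) <= perim (enum_fset H).
Proof.
move=> Hn; have := isoperim (fset_uniq H).
have : 0 < #|`H| by rewrite cardfs_gt0.
case: (ltnP 1 #|`H|) => h2 h1 /=.
  have := ceil_ge3 h2; move=> a b; apply: leq_trans b; rewrite -[4 + 2 * 1]/(2 * 3) leq_mul2l; exact: a.
have := ceil_ge2 h1; move=> a b; apply: leq_trans b; rewrite -[4 + 2 * 0]/(2 * 2) leq_mul2l; exact: a.
Qed.

Lemma perim_H1 (H : {fset cell}) : #|`H| = 1 -> perim (enum_fset H) = 4.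
Proof. by case: (enum_fset H) => [|x [|]] //= _; exact: perim1. Qed.

Lemma sum_const_seq (T : Type) (s : seq T) k : \sum_(x <- s) k = k * size s.
Proof. by elim: s => [|x s IH]; rewrite ?big_nil ?big_cons ?muln0 // IH mulnS. Qed.

Lemma sum_eq0_mem (T : eqType) (s : seq T) (f : T -> nat) x :
  \sum_(y <- s) f y = 0 -> x \in s -> f x = 0.
Proof.
elim: s => [|y s IH] //; rewrite big_cons in_cons => E /orP [/eqP ->|xs]; first by lia.
by apply: IH => //; lia.
Qed.

Lemma rat_eq (n h c : nat) :
  ((h%:R : rat) = (((2*n+2)%N%:R - (2*c)%N%:R) / 4%:R))%R <-> (4*h + 2*c = 2*n+2).
Proof.
split => H.
  have E : (((4*h + 2*c)%N%:R : rat) = (2*n+2)%N%:R)%R.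
    by rewrite natrD !natrM H; field.
  by move: E => /eqP; rewrite eqr_nat => /eqP.
have E : (((2*n+2)%N%:R : rat) = (4*h + 2*c)%N%:R)%R by rewrite H.
by rewrite E natrD !natrM; field.
Qed.

Unset Implicit Arguments.
Local Open Scope fset_scope.

Theorem lemma3 (A : {fset cell}) (n h : nat) :
  polyomino A -> #|`A| = n -> num_holes A h ->
  (efficiently_structured A h <-> (h%:R : rat)%R = M n h).
Proof.
move=> [An0 cA] <- [Hs [uHs HHs sHs]]; subst h.
have /fset0Pn [a0 a0A] := An0.
have key := E2_perim (enum_fset A).
rewrite (perim_decomp uHs HHs) in key.
have sub0 : {subset [:: a0] <= enum_fset A} by move=> x; rewrite inE => /eqP ->.
have G1 := @grow1 (enum_fset A) (fset_uniq A) cA [:: a0] a0 isT sub0 (mem_head _ _).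
rewrite E2_single /= in G1.
have n1 : 0 < #|`A| by rewrite cardfs_gt0.
rewrite /M; split.
  case => [[_ acy] H1 po].
  have G2 := @grow2 (enum_fset A) (fset_uniq A) cA acy [:: a0] a0 isT sub0 (mem_head _ _) (@conn_single a0).
  rewrite E2_single /= in G2.
  have SP : \sum_(H <- Hs) perim (enum_fset H) = 4 * size Hs.
    rewrite big_seq (eq_bigr (fun _ => 4)) -?big_seq ?sum_const_seq //.
    by move=> H HH; apply: perim_H1; apply: H1; apply/HHs.
  rewrite /minimal_outer_perimeter in po.
  apply/rat_eq; move: key G1 G2 SP po n1; set e := E2 _; set o := outer_perimeter _; set sp := bigop _ _ _; set N := #|` _|; set c := ceil_2sqrt _; set k := size Hs; lia.
move/rat_eq => Heq.
have O := outer_ge uHs HHs.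
have SP : 4 * size Hs + 2 * \sum_(H <- Hs) (1 < #|`H|) <= \sum_(H <- Hs) perim (enum_fset H).
  rewrite -(sum_const_seq Hs 4) big_distrr -big_split /= big_seq [X in _ <= X]big_seq.
  apply: leq_sum => H HH; have [Hn _ _ _] := (HHs H).2 HH; exact: perim_H_ge.
have [E2eq [B0 POeq]] : E2 (enum_fset A) = 2 * (#|`A| - 1) /\
    \sum_(H <- Hs) (1 < #|`H|) = 0 /\ outer_perimeter A = 2 * ceil_2sqrt (#|`A| + size Hs).
  move: key G1 SP O Heq n1.
  set e := E2 _; set o := outer_perimeter _; set sp := (\sum_(H <- Hs) perim _).
  set b := (\sum_(H <- Hs) (1 < _)); set c := ceil_2sqrt _; set N := #|` A|; set k := size Hs.
  lia.
split; [split => //|move=> H hH|exact: POeq].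
  move=> [p [sp ap cp]].
  have up : uniq p by case/andP: cp.
  have sp' : {subset p <= enum_fset A} by move=> x xp; move/allP: ap; apply.
  case: p sp ap cp up sp' => [|x p'] // sp ap cp up sp'.
  have := @grow1 (enum_fset A) (fset_uniq A) cA (x :: p') x up sp' (mem_head _ _).
  have := E2_cycle sp cp.
  move: E2eq n1; set e := E2 (enum_fset A); set N := #|` A|; set e' := E2 _; set k := size _.
  lia.
have HH := (HHs H).1 hH.
have := sum_eq0_mem B0 HH.
have [Hn _ _ _] := hH.
have : 0 < #|`H| by rewrite cardfs_gt0.
case: (ltnP 1 #|`H|) => //; lia.
Qed.
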